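(* Let $\mathcal{A}$ be a finite-dimensional commutative $\mathbb{K}$-algebra and let $\Lambda:\mathcal{A}\to\mathbb{K}$ be a linear map such that the rank of the bilinear form $(a,b)\mapsto\Lambda(ab)$ on $\mathcal{A}$ is maximal among all linear maps $\mathcal{A}\to\mathbb{K}$. Then $\mathcal{R}(\Lambda)\subseteq\mathrm{Rad}(\mathcal{A})$.
   Context: $\mathbb{K}$ is an algebraically closed field. $\mathcal{R}(\Lambda):=\{a\in\mathcal{A}:\Lambda(ab)=0\ \forall b\in\mathcal{A}\}$. $\mathrm{Rad}(\mathcal{A})$ is the radical of $\mathcal{A}$ (the nilradical, which for a finite-dimensional commutative algebra equals the intersection of its maximal ideals). *)

(* Defs.v *)
From HB Require Import structures.
From mathcomp Require Import all_boot all_order all_algebra all_field.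
Set Implicit Arguments. Unset Strict Implicit. Unset Printing Implicit Defensive.
Import GRing.Theory.
Local Open Scope ring_scope.

Definition form_rank (K : fieldType) (A : falgType K) (L : A -> K) : nat :=
  \rank (\matrix_(i < \dim (fullv : {vspace A}), j < \dim (fullv : {vspace A}))
          L (tnth (vbasis fullv) i * tnth (vbasis fullv) j)).

Definition form_radical (K : fieldType) (A : falgType K) (L : A -> K) (a : A) : Prop :=
  forall b : A, L (a * b) = 0.

Definition nilradical (K : fieldType) (A : falgType K) (a : A) : Prop :=
  exists n : nat, a ^+ n = 0.

(* Main.v *)
Require Import Defs.
From HB Require Import structures.
From mathcomp Require Import all_boot all_order all_algebra all_field.
From Stdlib Require Import Classical_Prop.
Set Implicit Arguments. Unset Strict Implicit. Unset Printing Implicit Defensive.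
Import GRing.Theory.
Local Open Scope ring_scope.

Definition gram (K : fieldType) (A : falgType K) (L : A -> K) :=
  \matrix_(i < \dim (fullv : {vspace A}), j < \dim (fullv : {vspace A}))
          L (tnth (vbasis fullv) i * tnth (vbasis fullv) j).

Definition xof (K : fieldType) (A : falgType K) (u : 'rV[K]_(\dim (fullv : {vspace A}))) : A :=
  \sum_i u 0 i *: tnth (vbasis fullv) i.

Lemma gram_mul (K : fieldType) (A : falgType K) (N : {linear A -> K^o}) u j :
  (u *m gram N) 0 j = N (xof u * tnth (vbasis fullv) j).
Proof.
rewrite mxE /xof mulr_suml linear_sum; apply: eq_bigr => i _.
by rewrite mxE -scalerAl linearZ.
Qed.

Lemma gram_ker (K : fieldType) (A : falgType K) (N : {linear A -> K^o}) u :
  u *m gram N = 0 <-> form_radical N (xof u).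
Proof.
split => [H b | H].
  rewrite (coord_vbasis (memvf b)) mulr_sumr linear_sum big1 // => j _.
  rewrite -scalerAr linearZ /= -(tnth_nth 0) -gram_mul H mxE.
  by rewrite /GRing.scale /= mulr0.
by apply/rowP => j; rewrite gram_mul H mxE.
Qed.

Lemma xof_coord (K : fieldType) (A : falgType K) (e : A) :
  xof (\row_i coord (vbasis fullv) i e) = e.
Proof.
rewrite {2}(coord_vbasis (memvf e)) /xof; apply: eq_bigr => i _.
by rewrite mxE (tnth_nth 0).
Qed.
Definition Mf (K : fieldType) (A : falgType K) (L : {linear A -> K^o}) (e : A)
  (i : 'I_(\dim (fullv : {vspace A}))) : A -> K^o :=
  fun x => L x + coord (vbasis fullv) i (e * x).

Fact Mf_linear (K : fieldType) (A : falgType K) (L : {linear A -> K^o}) e i :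
  linear (Mf L e i).
Proof.
move=> k u v; rewrite /Mf mulrDr -scalerAr !linearP /=.
by rewrite /GRing.scale /= mulrDr addrACA.
Qed.

HB.instance Definition _ (K : fieldType) (A : falgType K) (L : {linear A -> K^o}) e i :=
  GRing.isSemilinear.Build K A K^o _ (Mf L e i)
    (GRing.semilinear_linear (@Mf_linear K A L e i)).

Lemma radM_sub (K : fieldType) (A : falgType K)
    (A_comm : forall a b : A, a * b = b * a) (L : {linear A -> K^o}) e i
    (ee : e * e = e) (eR : form_radical L e) x :
  form_radical (Mf L e i) x -> form_radical L x.
Proof.
move=> H b; have := H (b - e * b).
rewrite /Mf.
have -> : e * (x * (b - e * b)) = 0.
  by rewrite mulrA [e * x]A_comm -mulrA mulrBr mulrA ee subrr mulr0.
rewrite linear0 addr0 mulrBr linearB /= => /eqP; rewrite subr_eq0 => /eqP ->.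
by rewrite mulrA [x * e]A_comm -mulrA eR.
Qed.

Lemma idem_exists (K : fieldType) (A : falgType K)
    (A_comm : forall a b : A, a * b = b * a) (a : A) :
  ~ nilradical a -> exists e : A, [/\ e * e = e, e != 0 & exists y, e = a * y].
Proof.
move=> nn.
pose V k := limg (amulr (a ^+ k)).
have memV k x : reflect (exists y, x = y * a ^+ k) (x \in V k).
  apply: (iffP memv_imgP) => [[y _ ->]|[y ->]]; exists y; rewrite ?memvf /amulr ?lfunE //=.
have sV k : (V k.+1 <= V k)%VS.
  apply/subvP => x /memV [y ->]; apply/memV; exists (y * a).
  by rewrite exprS mulrA.
have [k dk] : exists k, \dim (V k.+1) = \dim (V k).
  apply: NNPP => H.
  have lt k : (\dim (V k) + k <= \dim (V 0))%N.
    elim: k => [|k IH]; first by rewrite addn0.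
    apply: leq_trans IH; rewrite addnS ltn_add2r ltn_neqAle dimvS // andbT.
    by apply/eqP => E; apply: H; exists k.
  by have := lt (\dim (V 0)).+1; rewrite addnS ltnNge leq_addl.
have eV : V k.+1 = V k by apply/eqP; rewrite eqEdim sV dk leqnn.
have /memV [y Hy] : a ^+ k \in V k.+1 by rewrite eV; apply/memV; exists 1; rewrite mul1r.
have step j : a ^+ (k + j) = a ^+ (k + j).+1 * y.
  by rewrite exprD Hy -mulrA -exprD addSn; apply: A_comm.
have iter j : a ^+ k.+1 = a ^+ (k.+1 + j) * y ^+ j.
  elim: j => [|j IH]; first by rewrite addn0 mulr1.
  by rewrite IH addSnnS step exprS (exprS y) !mulrA.
pose c := a ^+ k.+1; pose d := y ^+ k.+1.
have ccd : c = c * c * d by rewrite /c /d -exprD -iter.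
exists (c * d); split.
- by rewrite mulrA [c * d * c]A_comm !mulrA -ccd.
- apply/eqP => e0; apply: nn; exists k.+1; rewrite -/c ccd -mulrA.
  by rewrite [c * d]A_comm in e0; rewrite [c * d]A_comm e0 mulr0.
- by exists (a ^+ k * d); rewrite /c exprS mulrA.
Qed.

Theorem theorem3p5 (K : closedFieldType) (A : falgType K)
    (A_comm : forall a b : A, a * b = b * a)
    (L : {linear A -> K^o})
    (L_max : forall M : {linear A -> K^o}, (form_rank M <= form_rank L)%N) :
  forall a : A, form_radical L a -> nilradical a.
Proof.
move=> a aR; apply: NNPP => nn.
have [e [ee en0 [y ey]]] := idem_exists A_comm nn.
have eR : form_radical L e by move=> b; rewrite ey -mulrA aR.
have [i ci] : exists i, coord (vbasis (fullv : {vspace A})) i e != 0.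
  apply: NNPP => H; move/eqP: en0; apply.
  rewrite (coord_vbasis (memvf e)) big1 // => i _.
  case: (eqVneq (coord (vbasis (fullv : {vspace A})) i e) 0) => [-> | ne].
    by rewrite scale0r.
  by case: H; exists i.
pose M : {linear A -> K^o} := Mf L e i.
have := L_max M; apply/negP; rewrite -ltnNge /form_rank.
rewrite -[X in (\rank X < _)%N]/(gram L) -[X in (_ < \rank X)%N]/(gram M).
have lt : (kermx (gram M) < kermx (gram L))%MS.
  rewrite ltmxE; apply/andP; split.
    apply/row_subP => r; apply/sub_kermxP. apply (proj2 (@gram_ker K A L _)).
    apply: (@radM_sub K A A_comm L e i ee eR); apply (proj1 (@gram_ker K A M _)); apply/sub_kermxP.
    exact: row_sub.
  apply/negP => H'.
  have Hu : (\row_j coord (vbasis fullv) j e <= kermx (gram L))%MS.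
    by apply/sub_kermxP; apply (proj2 (@gram_ker K A L _)); rewrite xof_coord.
  move: (submx_trans Hu H') => /sub_kermxP/(proj1 (@gram_ker K A M _)); rewrite xof_coord => /(_ 1).
  move=> H1.
  have H2 : L (e * 1) + coord (vbasis fullv) i (e * (e * 1)) = 0 by exact: H1.
  move: H2; rewrite !mulr1 ee.
  have -> : L e = 0 by rewrite -[e]mulr1 eR.
  rewrite add0r; exact/eqP.
have := rank_ltmx lt; rewrite !mxrank_ker => H.
rewrite ltnNge; apply/negP => H2; move: H; rewrite ltnNge leq_sub2l //.
Qed.
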